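(* Let $p,q$ be odd primes with $q-p=2$, and let $D=D_1\cdots D_n$ with $D_1,\dots,D_n$ distinct primes, $2\nmid D$, $p\nmid D$, $q\nmid D$; put $\widehat{D_i}=D/D_i$. Let $E'=E'_{+}: y^2=x^3-2(p+q)Dx^2+4D^2x$ and $\widehat\varphi:E'\to E$ the dual $2$-isogeny onto $E=E_+: y^2=x(x+pD)(x+qD)$. For each $i$ put $$\Pi_i^{+}(D)'=\Big(1-\big(\tfrac{-p\widehat{D_i}}{D_i}\big)\Big)\Big(1-\big(\tfrac{-q\widehat{D_i}}{D_i}\big)\Big)+\sum_{j=1,\,j\ne i}^{n}\Big(1-\big(\tfrac{D_i}{D_j}\big)\Big)\Big(1-\big(\tfrac{pqD_i}{D_j}\big)\Big).$$ Let $Z(n)=\{1,\dots,n\}$ and $I=\{i\in Z(n): D_i\equiv 1\ (\mathrm{mod}\ 8)\}\cup\{i: (1+p\widehat{D_i})(1+q\widehat{D_i})\equiv 0\ (\mathrm{mod}\ 16)\}\cup\{i: D_i\equiv 3\ (\mathrm{mod}\ 8),\ p\equiv 1\ (\mathrm{mod}\ 4)\}\cup\{i: D_i\equiv 7\ (\mathrm{mod}\ 8),\ p\equiv 3\ (\mathrm{mod}\ 4)\}$, and $\rho^{+}(D)'=\sum_{i\in I}\Big[\frac{1}{1+\Pi_i^{+}(D)'}\Big]$. Then there exists a subset $T\subset\{D_1,\dots,D_n\}$ with $\#T=\rho^{+}(D)'$ such that $S^{(\widehat\varphi)}(E'/\mathbb{Q})\supset\langle T\bmod\mathbb{Q}^{\star2}\rangle\cong(\mathbb{Z}/2\mathbb{Z})^{\rho^{+}(D)'}$.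 In particular $\dim_2 S^{(\widehat\varphi)}(E'/\mathbb{Q})\ge\rho^{+}(D)'$.
   Context: $(\frac{\cdot}{\cdot})$ is the Legendre symbol and $[x]$ the greatest integer $\le x$. The dual isogeny is $\widehat\varphi(x,y)=(y^2/(4x^2),\ y(4D^2-x^2)/(8x^2))$. The $\widehat\varphi$-Selmer group is viewed as a subgroup of $\mathbb{Q}^\star/\mathbb{Q}^{\star2}$: with $S=\{\infty,2,p,q,D_1,\dots,D_n\}$ and $\mathbb{Q}(S,2)=\langle -1,2,p,q,D_1,\dots,D_n\rangle$, it equals the set of $d\in\mathbb{Q}(S,2)$ (squarefree integer representatives) such that $C'_d: dw^2=d^2+(p+q)Dd z^2+pqD^2z^4$ has a $\mathbb{Q}_v$-point for every $v\in S$. *)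

(* Defs.v *)
From Stdlib Require Import ZArith List Reals Znumtheory.
Import ListNotations.
Open Scope Z_scope.

Definition is_sq_mod (a l : Z) : bool :=
  existsb (fun x => Z.eqb ((x * x - a) mod l) 0)
          (map Z.of_nat (seq 0 (Z.to_nat l))).

Definition legendre (a l : Z) : Z :=
  if Z.eqb (a mod l) 0 then 0 else if is_sq_mod a l then 1 else -1.

Definition zsum (l : list Z) : Z := fold_right Z.add 0 l.
Definition zprod (l : list Z) : Z := fold_right Z.mul 1 l.

(** D_i for index i in {0,...,n-1} (paper's D_{i+1}); D = D_1 ... D_n;
    hat D_i = D / D_i. *)
Definition Di (Ds : list Z) (i : nat) : Z := nth i Ds 1.
Definition Dprod (Ds : list Z) : Z := zprod Ds.
Definition Dhat (Ds : list Z) (i : nat) : Z := Dprod Ds / Di Ds i.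

Definition Pi_plus (p q : Z) (Ds : list Z) (i : nat) : Z :=
  (1 - legendre (- p * Dhat Ds i) (Di Ds i)) *
  (1 - legendre (- q * Dhat Ds i) (Di Ds i)) +
  zsum (map (fun j => (1 - legendre (Di Ds i) (Di Ds j)) *
                      (1 - legendre (p * q * Di Ds i) (Di Ds j)))
            (filter (fun j => negb (Nat.eqb j i)) (seq 0 (length Ds)))).

Definition in_I (p q : Z) (Ds : list Z) (i : nat) : bool :=
  Z.eqb (Di Ds i mod 8) 1
  || Z.eqb (((1 + p * Dhat Ds i) * (1 + q * Dhat Ds i)) mod 16) 0
  || (Z.eqb (Di Ds i mod 8) 3 && Z.eqb (p mod 4) 1)
  || (Z.eqb (Di Ds i mod 8) 7 && Z.eqb (p mod 4) 3).

(** rho^+(D)' = sum_{i in I} [ 1 / (1 + Pi_i) ]  (floor; 1 + Pi_i >= 1). *)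
Definition rho_plus (p q : Z) (Ds : list Z) : Z :=
  zsum (map (fun i => 1 / (1 + Pi_plus p q Ds i))
            (filter (in_I p q Ds) (seq 0 (length Ds)))).

Definition Cd_real_point (p q D d : Z) : Prop :=
  exists z w : R,
    (IZR d * w ^ 2 = IZR (d * d) + IZR ((p + q) * D * d) * z ^ 2
                     + IZR (p * q * D * D) * z ^ 4)%R.

(** l-adic integers as the inverse limit lim Z/l^k Z: a sequence x with
    x (k+1) = x k mod l^k. *)
Definition Zl_elt (l : Z) (x : nat -> Z) : Prop :=
  forall k : nat, (x (S k) - x k) mod (l ^ Z.of_nat k) = 0.

(** Q_l-point on C'_d: z = Z / l^m, w = W / l^n with Z, W in Z_l (every
    element of Q_l = Z_l[1/l] has this form).  The equation
    d w^2 = d^2 + a z^2 + b z^4 multiplied by l^(4m+2n) reads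
    d W^2 l^(4m) = d^2 l^(4m+2n) + a Z^2 l^(2m+2n) + b Z^4 l^(2n),
    an identity in Z_l, i.e. componentwise modulo l^k for all k. *)
Definition Cd_Ql_point (p q D d l : Z) : Prop :=
  let a := (p + q) * D * d in
  let b := p * q * D * D in
  exists (m n : nat) (Zs Ws : nat -> Z),
    Zl_elt l Zs /\ Zl_elt l Ws /\
    forall k : nat,
      (d * Ws k ^ 2 * l ^ (4 * Z.of_nat m)
       - (d * d * l ^ (4 * Z.of_nat m + 2 * Z.of_nat n)
          + a * Zs k ^ 2 * l ^ (2 * Z.of_nat m + 2 * Z.of_nat n)
          + b * Zs k ^ 4 * l ^ (2 * Z.of_nat n))) mod (l ^ Z.of_nat k) = 0.

Definition squarefree (d : Z) : Prop :=
  d <> 0 /\ forall k : Z, (k * k | d) -> Z.abs k = 1.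

Definition S_primes (p q : Z) (Ds : list Z) : list Z := 2 :: p :: q :: Ds.

Definition in_QS2 (p q : Z) (Ds : list Z) (d : Z) : Prop :=
  squarefree d /\ forall l : Z, prime l -> (l | d) -> In l (S_primes p q Ds).

(** The hat-phi-Selmer group S^(hat phi)(E'/Q), as a set of squarefree
    integer representatives of Q^*/Q^*2. *)
Definition selmer_hatphi (p q : Z) (Ds : list Z) (d : Z) : Prop :=
  in_QS2 p q Ds d /\
  Cd_real_point p q (Dprod Ds) d /\
  forall l, In l (S_primes p q Ds) -> Cd_Ql_point p q (Dprod Ds) d l.

Definition prodD (Ds : list Z) (U : list nat) : Z := zprod (map (Di Ds) U).

(* Main.v *)
Require Import Defs.
From Stdlib Require Import ZArith List Reals Znumtheory Lia Psatz ClassicalEpsilon Classical Bool Permutation.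
Import ListNotations.
Open Scope Z_scope.

Definition cong (n a b : Z) := (n | a - b).

Lemma cong_refl n a : cong n a a.
Proof. unfold cong. replace (a - a) with 0 by ring. apply Z.divide_0_r. Qed.
Lemma cong_sym n a b : cong n a b -> cong n b a.
Proof. unfold cong. intros [k Hk]. exists (-k). lia. Qed.
Lemma cong_trans n a b c : cong n a b -> cong n b c -> cong n a c.
Proof. unfold cong. intros [k Hk] [j Hj]. exists (k+j). lia. Qed.
Lemma cong_add n a b c d : cong n a b -> cong n c d -> cong n (a + c) (b + d).
Proof. unfold cong. intros [k Hk] [j Hj]. exists (k+j). lia. Qed.
Lemma cong_sub n a b c d : cong n a b -> cong n c d -> cong n (a - c) (b - d).
Proof. unfold cong. intros [k Hk] [j Hj]. exists (k-j). lia. Qed.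
Lemma cong_opp n a b : cong n a b -> cong n (- a) (- b).
Proof. unfold cong. intros [k Hk]. exists (-k). lia. Qed.
Lemma cong_mul n a b c d : cong n a b -> cong n c d -> cong n (a * c) (b * d).
Proof.
  unfold cong. intros [k Hk] [j Hj]. exists (k*c + b*j).
  replace (a*c - b*d) with ((a-b)*c + b*(c-d)) by ring. rewrite Hk, Hj. ring.
Qed.
Lemma cong_weak n m a b : (n | m) -> cong m a b -> cong n a b.
Proof. unfold cong. intros H1 H2. eapply Z.divide_trans; eauto. Qed.
Lemma cong_mod n a b : n <> 0 -> cong n a b -> a mod n = b mod n.
Proof.
  unfold cong. intros Hn [k Hk]. replace a with (b + k * n) by lia.
  apply Z.mod_add; auto.
Qed.
Lemma cong_of_mod n a b : n <> 0 -> a mod n = b mod n -> cong n a b.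
Proof.
  intros Hn H. unfold cong. exists (a / n - b / n).
  rewrite (Z.div_mod a n Hn) at 1. rewrite (Z.div_mod b n Hn) at 1. rewrite H. ring.
Qed.
Lemma cong_modr n a : n <> 0 -> cong n (a mod n) a.
Proof. intros Hn. apply cong_of_mod; auto. apply Z.mod_mod; auto. Qed.
Lemma cong_zero n a : cong n a 0 <-> (n | a).
Proof. unfold cong. rewrite Z.sub_0_r. tauto. Qed.

Ltac congr := repeat first
  [ apply cong_refl | assumption
  | apply cong_add | apply cong_sub | apply cong_mul | apply cong_opp ].

Lemma zpow_S l k : l ^ Z.of_nat (S k) = l * l ^ Z.of_nat k.
Proof. rewrite Nat2Z.inj_succ, Z.pow_succ_r; lia. Qed.
Lemma zpow_pos l k : 0 < l -> 0 < l ^ Z.of_nat k.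
Proof. intros; apply Z.pow_pos_nonneg; lia. Qed.
Lemma zpow_divide l a b : (a <= b)%nat -> (l ^ Z.of_nat a | l ^ Z.of_nat b).
Proof.
  intros H. exists (l ^ Z.of_nat (b - a)). rewrite <- Z.pow_add_r by lia.
  f_equal. lia.
Qed.

Lemma rel_prime_pow a l k : rel_prime a l -> rel_prime a (l ^ Z.of_nat k).
Proof.
  intros H. induction k.
  - simpl. apply rel_prime_sym, rel_prime_1.
  - rewrite zpow_S. apply rel_prime_mult; auto.
Qed.
Lemma inv_exists l a k : prime l -> ~ (l | a) ->
  exists y, cong (l ^ Z.of_nat k) (a * y) 1.
Proof.
  intros Hl Ha.
  assert (H : rel_prime a (l ^ Z.of_nat k)).
  { apply rel_prime_pow, rel_prime_sym, prime_rel_prime; auto. }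
  apply rel_prime_bezout in H. destruct H as [u v Huv].
  exists u. unfold cong. exists (-v). lia.
Qed.

Lemma prime_not_div_mul l a b : prime l -> ~ (l | a) -> ~ (l | b) -> ~ (l | a * b).
Proof. intros Hl Ha Hb H. apply prime_mult in H; tauto. Qed.

Lemma prime_ge2 l : prime l -> 2 <= l.
Proof. intros H. destruct H. lia. Qed.

Lemma odd_prime_not2 l : prime l -> l <> 2 -> ~ (l | 2).
Proof.
  intros Hl H2 Hd. apply H2. apply prime_div_prime; auto. apply prime_2.
Qed.

Lemma build_seq (l : Z) (P : nat -> Z -> Prop) (x0 : Z) :
  0 < l -> P 0%nat x0 ->
  (forall k x, P k x -> exists y, (l ^ Z.of_nat k | y - x) /\ P (S k) y) ->
  exists W : nat -> Z, Zl_elt l W /\ forall k, P k (W k).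
Proof.
  intros Hl H0 Hs.
  assert (g : forall k x, P k x -> {y | (l ^ Z.of_nat k | y - x) /\ P (S k) y}).
  { intros k x H. apply constructive_indefinite_description. auto. }
  set (F := fix F (k : nat) : {x | P k x} :=
         match k with
         | O => exist _ x0 H0
         | S k' => let (x, Hx) := F k' in
                   let (y, Hy) := g k' x Hx in exist _ y (proj2 Hy)
         end).
  exists (fun k => proj1_sig (F k)). split.
  - intros k. simpl. destruct (F k) as [x Hx]. simpl.
    destruct (g k x Hx) as [y [Hy1 Hy2]]. simpl.
    pose proof (zpow_pos l k Hl). apply Z.mod_divide; [lia | auto].
  - intros k. destruct (F k). auto.
Qed.

Definition SqZl (l N : Z) : Prop :=
  exists W : nat -> Z, Zl_elt l W /\ forall k, (l ^ Z.of_nat k | W k * W k - N).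

Definition sq (l a : Z) : Prop := exists x, cong l (x * x) a.

Lemma hensel_odd l N : prime l -> l <> 2 -> ~ (l | N) -> sq l N -> SqZl l N.
Proof.
  intros Hl H2 HN [x0 Hx0].
  assert (Hl0 : 0 < l) by (pose proof (prime_ge2 l Hl); lia).
  destruct (build_seq l (fun k x => (l ^ Z.of_nat k | x * x - N)) x0 Hl0) as [W [HW1 HW2]].
  - simpl. apply Z.divide_1_l.
  - intros k x Hx. destruct k as [|k].
    + exists x0. split. simpl. apply Z.divide_1_l. change (l ^ Z.of_nat 1 | x0 * x0 - N). replace (l ^ Z.of_nat 1) with l by (change (Z.of_nat 1) with 1; rewrite Z.pow_1_r; reflexivity). exact Hx0.
    + assert (Hxl : ~ (l | x)).
      { intros Hd. apply HN. rewrite zpow_S in Hx.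
        assert (H1 : (l | x * x - N)) by (eapply Z.divide_trans; [|exact Hx]; exists (l ^ Z.of_nat k); ring).
        replace N with (x * x - (x * x - N)) by ring. apply Z.divide_sub_r; auto.
        apply Z.divide_mul_l; auto. }
      assert (H2x : ~ (l | 2 * x)) by (apply prime_not_div_mul; auto; apply odd_prime_not2; auto).
      destruct (inv_exists l (2 * x) 1 Hl H2x) as [i Hi]. change (Z.of_nat 1) with 1 in Hi; rewrite Z.pow_1_r in Hi.
      destruct Hx as [c Hc].
      set (L := l ^ Z.of_nat (S k)) in *.
      exists (x - c * i * L). split.
      * exists (- c * i). ring.
      * rewrite (zpow_S l (S k)). fold L.
        destruct Hi as [j Hj].
        assert (HL : L = l * l ^ Z.of_nat k) by (unfold L; apply zpow_S).
        exists (- c * j + c * c * i * i * l ^ Z.of_nat k).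
        replace N with (x * x - c * L) by lia.
        replace ((x - c * i * L) * (x - c * i * L) - (x * x - c * L)) with
          (- c * (2 * x * i - 1) * L + c * c * i * i * L * L) by ring.
        rewrite Hj. transitivity (- c * (j * l) * L + c*c*i*i*(l * l ^ Z.of_nat k)*L); [rewrite <- HL; ring | ring].
  - exists W. split; auto.
Qed.

Lemma hensel_2 N : (8 | N - 1) -> SqZl 2 N.
Proof.
  intros HN.
  destruct (build_seq 2 (fun k x => (2 ^ (Z.of_nat k + 3) | x * x - N)) 1) as [W [HW1 HW2]].
  - lia.
  - replace (2 ^ (Z.of_nat 0 + 3)) with 8 by reflexivity. destruct HN as [c Hc]. exists (-c). lia.
  - intros k x Hx. destruct Hx as [c Hc].
    set (P := 2 ^ Z.of_nat k) in *.
    assert (HP : 2 ^ (Z.of_nat k + 3) = 8 * P) by (unfold P; rewrite Z.pow_add_r by lia; ring).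
    assert (HP2 : 2 ^ (Z.of_nat (S k) + 3) = 16 * P)
      by (unfold P; rewrite Nat2Z.inj_succ, <- Z.add_1_r, !Z.pow_add_r by lia; ring).
    rewrite HP in Hc. rewrite HP2.
    destruct HN as [c' Hc'].
    destruct (Z.Even_or_Odd x) as [[u Hu]|[u Hu]].
    + exfalso. subst x. nia.
    + exists (x - c * 4 * P). split.
      * exists (- 4 * c). ring.
      * exists (- c * u + c * c * P).
        replace N with (x * x - c * (8 * P)) by lia. subst x. ring.
  - exists W. split; auto. intros k. eapply Z.divide_trans; [|apply HW2].
    exists 8. rewrite Z.pow_add_r by lia. ring.
Qed.

Definition zr (a : Z) (n : nat) : list Z := map (fun k => a + Z.of_nat k) (seq 0 n).

Lemma in_zr a n x : In x (zr a n) <-> a <= x < a + Z.of_nat n.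
Proof.
  unfold zr. rewrite in_map_iff. split.
  - intros [k [Hk Hin]]. apply in_seq in Hin. lia.
  - intros H. exists (Z.to_nat (x - a)). split. lia. apply in_seq. lia.
Qed.
Lemma zr_length a n : length (zr a n) = n.
Proof. unfold zr. rewrite length_map, length_seq. auto. Qed.
Lemma zr_nodup a n : NoDup (zr a n).
Proof.
  unfold zr. apply NoDup_map_NoDup_ForallPairs. intros x y _ _ H. lia. apply seq_NoDup.
Qed.

Lemma nodup_map_inj {A B} (f : A -> B) (l : list A) :
  NoDup l -> (forall x y, In x l -> In y l -> f x = f y -> x = y) -> NoDup (map f l).
Proof. intros H1 H2. apply NoDup_map_NoDup_ForallPairs; auto. Qed.

Lemma divide_small l z : 0 < l -> (l | z) -> Z.abs z < l -> z = 0.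
Proof. intros Hl [k Hk] Hz. subst z. rewrite Z.abs_mul in Hz. rewrite (Z.abs_eq l) in Hz by lia. assert (Z.abs k = 0) by nia. lia. Qed.

Section Sq.
Variable l : Z.
Hypothesis Hl : prime l.
Hypothesis Hl2 : l <> 2.

Lemma l_pos : 0 < l.
Proof. pose proof (prime_ge2 l Hl). lia. Qed.
Lemma l_odd : exists h, l = 2 * h + 1 /\ 1 <= h.
Proof.
  pose proof (prime_ge2 l Hl). destruct (Z.Even_or_Odd l) as [[h Hh]|[h Hh]].
  - exfalso. apply Hl2. symmetry. apply prime_div_prime; [apply prime_2 | auto | exists h; lia].
  - exists h. lia.
Qed.

Lemma sq_cong a b : sq l a -> cong l a b -> sq l b.
Proof. intros [x Hx] H. exists x. eapply cong_trans; eauto. Qed.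
Lemma sq_mul a b : sq l a -> sq l b -> sq l (a * b).
Proof.
  intros [x Hx] [y Hy]. exists (x * y).
  replace (x * y * (x * y)) with ((x * x) * (y * y)) by ring. apply cong_mul; auto.
Qed.
Lemma sq_sq x : sq l (x * x).
Proof. exists x. apply cong_refl. Qed.
Lemma sq_div a b : ~ (l | a) -> sq l a -> sq l (a * b) -> sq l b.
Proof.
  intros Ha [s Hs] [t Ht].
  assert (Hsu : ~ (l | s)).
  { intros Hd. apply Ha. apply cong_sym in Hs. unfold cong in Hs.
    replace a with ((a - s * s) + s * s) by ring. apply Z.divide_add_r; auto.
    apply Z.divide_mul_l; auto. }
  destruct (inv_exists l s 1 Hl Hsu) as [s' Hs'].
  change (Z.of_nat 1) with 1 in Hs'; rewrite Z.pow_1_r in Hs'.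
  exists (t * s').
  apply cong_trans with (a * b * (s' * s')).
  { replace (t * s' * (t * s')) with ((t * t) * (s' * s')) by ring. apply cong_mul; auto. apply cong_refl. }
  apply cong_trans with ((s * s') * (s * s') * b).
  { replace ((s * s') * (s * s') * b) with ((s * s) * b * (s' * s')) by ring.
    apply cong_mul; [apply cong_mul|]; [apply cong_sym; auto | apply cong_refl | apply cong_refl]. }
  replace b with (1 * 1 * b) at 2 by ring.
  apply cong_mul; [apply cong_mul|]; auto; apply cong_refl.
Qed.

Lemma unit_mul a b : ~ (l | a) -> ~ (l | b) -> ~ (l | a * b).
Proof. apply prime_not_div_mul; auto. Qed.

Lemma sq_inj h x y : l = 2 * h + 1 -> 0 <= x <= h -> 0 <= y <= h ->
  (l | x * x - y * y) -> x = y.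
Proof.
  intros Hh Hx Hy H. replace (x * x - y * y) with ((x - y) * (x + y)) in H by ring.
  apply prime_mult in H; auto. destruct H as [H|H].
  - apply divide_small in H; lia.
  - apply divide_small in H; lia.
Qed.
Lemma sq_inj_c h c x y : l = 2 * h + 1 -> ~ (l | c) -> 0 <= x <= h -> 0 <= y <= h ->
  (l | c * (x * x) - c * (y * y)) -> x = y.
Proof.
  intros Hh Hc Hx Hy H. apply (sq_inj h); auto.
  replace (c * (x * x) - c * (y * y)) with (c * (x * x - y * y)) in H by ring.
  apply prime_mult in H; auto. tauto.
Qed.

Lemma mod_cong_l a : cong l (a mod l) a.
Proof. apply cong_modr. pose proof l_pos. lia. Qed.

Lemma sq_rep h v : l = 2 * h + 1 -> sq l v -> ~ (l | v) ->
  exists r, 1 <= r <= h /\ (r * r) mod l = v mod l.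
Proof.
  intros Hh [t Ht] Hv. pose proof l_pos as Hl0.
  set (t' := t mod l).
  assert (Ht' : 0 <= t' < l) by (apply Z.mod_pos_bound; lia).
  assert (Hc : cong l (t' * t') v).
  { eapply cong_trans; [|exact Ht]. apply cong_mul; apply mod_cong_l. }
  assert (Hnz : t' <> 0).
  { intros E. apply Hv. rewrite E in Hc. apply cong_sym in Hc. unfold cong in Hc.
    rewrite Z.sub_0_r in Hc. auto. }
  destruct (Z_le_gt_dec t' h).
  - exists t'. split. lia. apply cong_mod; [lia|]. auto.
  - exists (l - t'). split. lia. apply cong_mod; [lia|].
    eapply cong_trans; [|exact Hc]. exists (l - 2 * t'). ring.
Qed.

Definition Lsq (h : Z) : list Z := map (fun x => (x * x) mod l) (zr 1 (Z.to_nat h)).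

Lemma NS a b : ~ (l | a) -> ~ (l | b) -> ~ sq l a -> ~ sq l b -> sq l (a * b).
Proof.
  intros Ha Hb Hsa Hsb. destruct l_odd as [h [Hh Hh1]]. pose proof l_pos as Hl0.
  set (L1 := Lsq h).
  set (L2 := map (fun x => (a * (x * x)) mod l) (zr 1 (Z.to_nat h))).
  assert (Hnd : NoDup (L1 ++ L2)).
  { apply NoDup_app.
    - apply nodup_map_inj. apply zr_nodup. intros x y Hx Hy E. apply in_zr in Hx, Hy.
      apply (sq_inj h); try lia. apply cong_of_mod in E; [|lia]. exact E.
    - apply nodup_map_inj. apply zr_nodup. intros x y Hx Hy E. apply in_zr in Hx, Hy.
      apply (sq_inj_c h a); try lia; auto. apply cong_of_mod in E; [|lia]. exact E.
    - intros v Hv1 Hv2. unfold L1, Lsq, L2 in *. apply in_map_iff in Hv1, Hv2.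
      destruct Hv1 as [x [Ex Hx]]. destruct Hv2 as [y [Ey Hy]]. apply in_zr in Hx, Hy.
      rewrite <- Ey in Ex. apply cong_of_mod in Ex; [|lia].
      apply Hsa. apply (sq_div (y * y)).
      + intros Hd. apply prime_mult in Hd; auto. destruct Hd as [Hd|Hd];
        apply divide_small in Hd; lia.
      + apply sq_sq.
      + rewrite Z.mul_comm. exists x. exact Ex. }
  assert (Hincl : incl (zr 1 (Z.to_nat (l - 1))) (L1 ++ L2)).
  { apply NoDup_length_incl; auto.
    - rewrite length_app. unfold L1, Lsq, L2. rewrite !length_map, !zr_length. lia.
    - intros v Hv. apply in_zr.
      apply in_app_or in Hv. destruct Hv as [Hv|Hv]; unfold L1, Lsq, L2 in Hv;
      apply in_map_iff in Hv; destruct Hv as [x [Ex Hx]]; apply in_zr in Hx; subst v.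
      + split; [|pose proof (Z.mod_pos_bound (x*x) l Hl0); lia].
        assert ((x * x) mod l <> 0); [|pose proof (Z.mod_pos_bound (x*x) l Hl0); lia].
        intros E. apply Z.mod_divide in E; [|lia]. apply prime_mult in E; auto.
        destruct E as [E|E]; apply divide_small in E; lia.
      + split; [|pose proof (Z.mod_pos_bound (a*(x*x)) l Hl0); lia].
        assert ((a * (x * x)) mod l <> 0); [|pose proof (Z.mod_pos_bound (a*(x*x)) l Hl0); lia].
        intros E. apply Z.mod_divide in E; [|lia]. apply prime_mult in E; auto.
        destruct E as [E|E]; [tauto|]. apply prime_mult in E; auto.
        destruct E as [E|E]; apply divide_small in E; lia. }
  assert (Hbm : In (b mod l) (zr 1 (Z.to_nat (l - 1)))).
  { apply in_zr. pose proof (Z.mod_pos_bound b l Hl0).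
    assert (b mod l <> 0). { intros E. apply Hb. apply Z.mod_divide; auto; lia. } lia. }
  apply Hincl in Hbm. apply in_app_or in Hbm. destruct Hbm as [Hbm|Hbm];
  unfold L1, Lsq, L2 in Hbm; apply in_map_iff in Hbm; destruct Hbm as [x [Ex Hx]].
  - exfalso. apply Hsb. exists x. apply cong_trans with (b mod l).
    + rewrite <- Ex. apply cong_sym, mod_cong_l.
    + apply mod_cong_l.
  - exists (a * x). apply cong_trans with (a * (a * (x * x))).
    + replace (a * x * (a * x)) with (a * (a * (x * x))) by ring. apply cong_refl.
    + apply cong_mul. apply cong_refl. apply cong_trans with (b mod l).
      * rewrite <- Ex. apply cong_sym, mod_cong_l.
      * apply mod_cong_l.
Qed.

End Sq.

Section Leg.
Variable l : Z.
Hypothesis Hl : prime l.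
Hypothesis Hl2 : l <> 2.

Lemma L3 c d : ~ (l | c) -> ~ (l | d) -> ~ sq l (- c) ->
  exists x, sq l (d * (1 + c * (x * x))) /\ ~ (l | d * (1 + c * (x * x))).
Proof.
  intros Hc Hd Hnc. pose proof (l_pos l Hl Hl2) as Hl0.
  assert (Hnz : forall x, ~ (l | 1 + c * (x * x))).
  { intros x Hx. apply Hnc. apply (sq_div l Hl (x * x)).
    - intros Hxx.
      assert (H1 : (l | 1)).
      { replace 1 with ((1 + c * (x * x)) - c * (x * x)) by ring. apply Z.divide_sub_r; auto.
        apply Z.divide_mul_r; auto. }
      apply Z.divide_pos_le in H1; pose proof (prime_ge2 l Hl); lia.
    - apply sq_sq.
    - exists 1. unfold cong. destruct Hx as [k Hk]. exists k. lia. }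
  destruct (classic (sq l d)) as [Hsd|Hsd].
  { exists 0. replace (d * (1 + c * (0 * 0))) with d by ring. auto. }
  destruct (classic (exists x, ~ sq l (1 + c * (x * x)))) as [[x Hx]|Hall].
  { exists x. split. apply NS; auto. apply unit_mul; auto. }
  exfalso. destruct (l_odd l Hl Hl2) as [h [Hh Hh1]].
  set (M := map (fun x => (1 + c * (x * x)) mod l) (zr 0 (Z.to_nat (h + 1)))).
  assert (HM : NoDup M).
  { apply nodup_map_inj. apply zr_nodup. intros x y Hx Hy E. apply in_zr in Hx, Hy.
    apply (sq_inj_c l Hl Hl2 h c); try lia; auto. apply cong_of_mod in E; [|lia].
    unfold cong in *. replace (c * (x * x) - c * (y * y)) with (1 + c * (x * x) - (1 + c * (y * y))) by ring.
    auto. }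
  assert (Hinc : incl M (Lsq l h)).
  { intros v Hv. unfold M in Hv. apply in_map_iff in Hv. destruct Hv as [x [Ex Hx]].
    assert (Hs : sq l (1 + c * (x * x))).
    { apply NNPP. intros Hn. apply Hall. exists x. auto. }
    destruct (sq_rep l Hl Hl2 h (1 + c * (x * x)) Hh Hs (Hnz x)) as [r [Hr Er]].
    unfold Lsq. apply in_map_iff. exists r. split. congruence. apply in_zr. lia. }
  apply NoDup_incl_length in Hinc; auto. unfold M, Lsq in Hinc.
  rewrite !length_map, !zr_length in Hinc. lia.
Qed.

Lemma is_sq_mod_spec a : is_sq_mod a l = true <-> sq l a.
Proof.
  pose proof (l_pos l Hl Hl2) as Hl0. unfold is_sq_mod. rewrite existsb_exists. split.
  - intros [x [_ Hx]]. exists x. apply Z.eqb_eq in Hx. apply Z.mod_divide in Hx; [|lia]. exact Hx.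
  - intros [x Hx]. exists (x mod l). split.
    + apply in_map_iff. exists (Z.to_nat (x mod l)). split.
      * pose proof (Z.mod_pos_bound x l Hl0). lia.
      * apply in_seq. pose proof (Z.mod_pos_bound x l Hl0). lia.
    + apply Z.eqb_eq. apply Z.mod_divide; [lia|].
      apply cong_trans with (x * x); auto. apply cong_mul; apply mod_cong_l; auto.
Qed.

Lemma leg_0 a : (l | a) -> legendre a l = 0.
Proof.
  intros H. unfold legendre. pose proof (l_pos l Hl Hl2).
  apply Z.mod_divide in H; [|lia]. rewrite H. reflexivity.
Qed.
Lemma leg_1 a : ~ (l | a) -> sq l a -> legendre a l = 1.
Proof.
  intros H1 H2. unfold legendre. pose proof (l_pos l Hl Hl2).
  destruct (Z.eqb_spec (a mod l) 0).
  - exfalso. apply H1. apply Z.mod_divide; auto; lia.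
  - apply is_sq_mod_spec in H2. rewrite H2. auto.
Qed.
Lemma leg_m1 a : ~ (l | a) -> ~ sq l a -> legendre a l = -1.
Proof.
  intros H1 H2. unfold legendre. pose proof (l_pos l Hl Hl2).
  destruct (Z.eqb_spec (a mod l) 0).
  - exfalso. apply H1. apply Z.mod_divide; auto; lia.
  - destruct (is_sq_mod a l) eqn:E; auto. apply is_sq_mod_spec in E. tauto.
Qed.
Lemma leg_1_sq a : legendre a l = 1 -> sq l a /\ ~ (l | a).
Proof.
  intros H. destruct (classic (l | a)) as [Ha|Ha].
  - rewrite leg_0 in H; auto. lia.
  - destruct (classic (sq l a)); auto. rewrite leg_m1 in H; auto. lia.
Qed.
Lemma leg_unit a : ~ (l | a) -> legendre a l = 1 \/ legendre a l = -1.
Proof.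
  intros H. destruct (classic (sq l a)).
  - left. apply leg_1; auto.
  - right. apply leg_m1; auto.
Qed.

Lemma leg_mul a b : legendre (a * b) l = legendre a l * legendre b l.
Proof.
  destruct (classic (l | a)) as [Ha|Ha].
  { rewrite (leg_0 a Ha), (leg_0 (a * b)); [ring|]. apply Z.divide_mul_l; auto. }
  destruct (classic (l | b)) as [Hb|Hb].
  { rewrite (leg_0 b Hb), (leg_0 (a * b)); [ring|]. apply Z.divide_mul_r; auto. }
  assert (Hab := unit_mul l Hl a b Ha Hb).
  destruct (classic (sq l a)) as [Sa|Sa]; destruct (classic (sq l b)) as [Sb|Sb].
  - rewrite (leg_1 a Ha Sa), (leg_1 b Hb Sb), (leg_1 (a * b) Hab); [ring|]. apply sq_mul; auto.
  - rewrite (leg_1 a Ha Sa), (leg_m1 b Hb Sb), (leg_m1 (a * b) Hab); [ring|].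
    intros S. apply Sb. apply (sq_div l Hl a b); auto.
  - rewrite (leg_m1 a Ha Sa), (leg_1 b Hb Sb), (leg_m1 (a * b) Hab); [ring|].
    intros S. apply Sa. apply (sq_div l Hl b a); auto. rewrite Z.mul_comm; auto.
  - rewrite (leg_m1 a Ha Sa), (leg_m1 b Hb Sb), (leg_1 (a * b) Hab); [ring|]. apply NS; auto.
Qed.

End Leg.

Definition Good (l d x y : Z) : Prop :=
  exists (m j : nat) (Zc N' : Z),
    d * (l ^ (2 * Z.of_nat m) + x * Zc * Zc) * (l ^ (2 * Z.of_nat m) + y * Zc * Zc)
    = l ^ (2 * Z.of_nat j) * N' /\ SqZl l N'.

Lemma Good_sym l d x y : Good l d x y -> Good l d y x.
Proof.
  intros [m [j [Zc [N' [H1 H2]]]]]. exists m, j, Zc, N'. split; auto. rewrite <- H1. ring.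
Qed.

Lemma pow2m l m : l ^ (2 * Z.of_nat m) = (l ^ Z.of_nat m) ^ 2.
Proof. rewrite Z.mul_comm, Z.pow_mul_r; lia. Qed.

Lemma point_of p q D d e l : 0 < l -> D = d * e -> Good l d (p * e) (q * e) ->
  Cd_Ql_point p q D d l.
Proof.
  intros Hl HD [m [j [Zc [N' [H1 [W [HW1 HW2]]]]]]].
  unfold Cd_Ql_point.
  exists m, (2 * m)%nat, (fun _ => Zc), (fun k => l ^ Z.of_nat j * W k). split; [|split].
  - intros k. replace (Zc - Zc) with 0 by ring. apply Z.mod_0_l. pose proof (zpow_pos l k Hl). lia.
  - intros k. replace (l ^ Z.of_nat j * W (S k) - l ^ Z.of_nat j * W k) with
      (l ^ Z.of_nat j * (W (S k) - W k)) by ring.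
    pose proof (HW1 k) as H. apply Z.mod_divide in H; [|pose proof (zpow_pos l k Hl); lia].
    apply Z.mod_divide; [pose proof (zpow_pos l k Hl); lia|]. apply Z.divide_mul_r; auto.
  - intros k. pose proof (zpow_pos l k Hl). apply Z.mod_divide; [lia|].
    rewrite !pow2m in H1.
    set (A := l ^ Z.of_nat m) in *. set (J := l ^ Z.of_nat j) in *.
    assert (E4 : l ^ (4 * Z.of_nat m) = A ^ 4) by (unfold A; rewrite Z.mul_comm, Z.pow_mul_r; lia).
    assert (E8 : l ^ (4 * Z.of_nat m + 2 * Z.of_nat (2 * m)) = A ^ 8)
      by (unfold A; rewrite <- Z.pow_mul_r by lia; f_equal; lia).
    assert (E6 : l ^ (2 * Z.of_nat m + 2 * Z.of_nat (2 * m)) = A ^ 6)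
      by (unfold A; rewrite <- Z.pow_mul_r by lia; f_equal; lia).
    assert (E4' : l ^ (2 * Z.of_nat (2 * m)) = A ^ 4)
      by (unfold A; rewrite <- Z.pow_mul_r by lia; f_equal; lia).
    rewrite E4, E8, E6, E4'.
    replace (d * (J * W k) ^ 2 * A ^ 4 -
      (d * d * A ^ 8 + (p + q) * D * d * Zc ^ 2 * A ^ 6 + p * q * D * D * Zc ^ 4 * A ^ 4))
      with (d * A ^ 4 * (J ^ 2 * (W k * W k - N')) +
            d * A ^ 4 * (J ^ 2 * N' - d * (A ^ 2 + p * e * Zc * Zc) * (A ^ 2 + q * e * Zc * Zc)))
      by (subst D; ring).
    rewrite H1. replace (J ^ 2 * N' - J ^ 2 * N') with 0 by ring. rewrite Z.mul_0_r, Z.add_0_r.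
    apply Z.divide_mul_r. apply Z.divide_mul_r. auto.
Qed.

Lemma Good_zero l d x y : SqZl l d -> Good l d x y.
Proof.
  intros H. exists 0%nat, 0%nat, 0, d. split; auto. change (Z.of_nat 0) with 0. rewrite Z.mul_0_r, Z.pow_0_r. ring.
Qed.

Lemma odd_sq8 w : Z.odd w = true -> (8 | w * w - 1).
Proof.
  intros H. destruct (Z.Even_or_Odd w) as [[u Hu]|[u Hu]].
  - subst. rewrite Z.odd_mul in H. simpl in H. discriminate.
  - subst w. destruct (Z.Even_or_Odd u) as [[v Hv]|[v Hv]]; subst u.
    + exists (2 * v * v + v). ring.
    + exists (2 * v * v + 3 * v + 1). ring.
Qed.

Lemma ndiv_cong l a b : cong l a b -> ~ (l | b) -> ~ (l | a).
Proof.
  intros H Hb Ha. apply Hb. unfold cong in H.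
  replace b with (a - (a - b)) by ring. apply Z.divide_sub_r; auto.
Qed.

Lemma pw0 l : l ^ (2 * Z.of_nat 0) = 1.
Proof. reflexivity. Qed.
Lemma pw1 l : l ^ (2 * Z.of_nat 1) = l * l.
Proof. change (2 * Z.of_nat 1) with 2. ring. Qed.
Lemma pw2 l : l ^ (2 * Z.of_nat 2) = l * l * l * l.
Proof. change (2 * Z.of_nat 2) with 4. ring. Qed.
Lemma pw3 l : l ^ (2 * Z.of_nat 3) = l * l * l * l * l * l.
Proof. change (2 * Z.of_nat 3) with 6. ring. Qed.

Lemma root_from l x k : SqZl l (- x) -> (exists y, cong (l ^ Z.of_nat k) (x * y) 1) ->
  exists Z0, cong (l ^ Z.of_nat k) (x * Z0 * Z0) (-1).
Proof.
  intros [W [_ HW]] [y Hy]. exists (W k * y).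
  set (L := l ^ Z.of_nat k) in *.
  apply cong_trans with (x * (- x) * (y * y)).
  { replace (x * (W k * y) * (W k * y)) with (x * (W k * W k) * (y * y)) by ring.
    apply cong_mul; [apply cong_mul|]; [apply cong_refl| exact (HW k) |apply cong_refl]. }
  replace (x * - x * (y * y)) with (- ((x * y) * (x * y))) by ring.
  replace (-1) with (- (1 * 1)) by ring. apply cong_opp. apply cong_mul; auto.
Qed.

Lemma root_odd l x k : prime l -> l <> 2 -> ~ (l | x) -> sq l (- x) ->
  exists Z0, cong (l ^ Z.of_nat k) (x * Z0 * Z0) (-1).
Proof.
  intros Hl H2 Hx Hs. apply root_from.
  - apply hensel_odd; auto. intros H. apply Hx. apply Z.divide_opp_r in H. rewrite Z.opp_involutive in H. auto.
  - apply inv_exists; auto.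
Qed.

Lemma unit_of_root l x Z0 : prime l -> cong l (x * Z0 * Z0) (-1) -> ~ (l | x) /\ ~ (l | Z0).
Proof.
  intros Hl [r Hr]. pose proof (prime_ge2 l Hl).
  split; intros Hd.
  - assert (H3 : (l | 1)).
    { replace 1 with ((x * Z0 * Z0 + 1) - x * (Z0 * Z0)) by ring. apply Z.divide_sub_r.
      exists r. lia. apply Z.divide_mul_l; auto. }
    apply Z.divide_pos_le in H3; lia.
  - assert (H3 : (l | 1)).
    { replace 1 with ((x * Z0 * Z0 + 1) - (x * Z0) * Z0) by ring. apply Z.divide_sub_r.
      exists r. lia. apply Z.divide_mul_r; auto. }
    apply Z.divide_pos_le in H3; lia.
Qed.

Ltac units := repeat (apply unit_mul; auto).

Lemma G_root l d d' x c : prime l -> l <> 2 -> d = l * d' -> ~ (l | d') -> ~ (l | c) ->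
  ~ (l | x) -> sq l (- x) -> Good l d x (x + 2 * c).
Proof.
  intros Hl H2 Hd Hd' Hc Hx Hs.
  destruct (root_odd l x 2 Hl H2 Hx Hs) as [Z0 HZ0].
  assert (HZ0' : cong l (x * Z0 * Z0) (-1)).
  { eapply cong_weak; [|exact HZ0]. exists l. change (Z.of_nat 2) with 2. ring. }
  destruct (unit_of_root l x Z0 Hl HZ0') as [_ HZu].
  destruct HZ0 as [r Hr]. change (Z.of_nat 2) with 2 in Hr.
  set (t := d' * x * c * Z0).
  set (Zc := Z0 + l * t).
  set (A := l * r + 2 * x * Z0 * t + l * x * t * t).
  set (B := l * A + 2 * c * Zc * Zc).
  exists 0%nat, 1%nat, Zc, (d' * A * B). rewrite pw0, pw1. split.
  - assert (E1 : 1 + x * Zc * Zc = l * A).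
    { unfold Zc, A. replace (l ^ 2) with (l * l) in Hr by ring. nia. }
    assert (E2 : 1 + (x + 2 * c) * Zc * Zc = B).
    { unfold B. rewrite <- E1. ring. }
    rewrite E1, E2, Hd. ring.
  - apply hensel_odd; auto.
    + apply (ndiv_cong l _ ((2 * d' * x * c * Z0 * Z0) * (2 * d' * x * c * Z0 * Z0))).
      * unfold cong. exists (d' * (r + x * t * t) * B + d' * (2 * x * Z0 * t) * (A + 2 * c * (2 * Z0 * t + l * t * t))).
        unfold B, Zc, A, t. ring.
      * units; apply odd_prime_not2; auto.
    + exists (2 * d' * x * c * Z0 * Z0). apply cong_sym.
      unfold cong. exists (d' * (r + x * t * t) * B + d' * (2 * x * Z0 * t) * (A + 2 * c * (2 * Z0 * t + l * t * t))).
      unfold B, Zc, A, t. ring.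
Qed.



Lemma G_padic l d x y : prime l -> l <> 2 -> (l | x) -> ~ (l | y) -> ~ (l | d) -> Good l d x y.
Proof.
  intros Hl H2 Hx Hy Hd. destruct Hx as [x' Hx']. subst x.
  destruct (classic (sq l (- y))) as [Hs|Hs].
  - destruct (root_odd l y 3 Hl H2 Hy Hs) as [Z0 HZ0].
    assert (HZ0' : cong l (y * Z0 * Z0) (-1)).
    { eapply cong_weak; [|exact HZ0]. exists (l * l). change (Z.of_nat 3) with 3. ring. }
    destruct (unit_of_root l y Z0 Hl HZ0') as [_ HZu].
    destruct HZ0 as [r Hr]. change (Z.of_nat 3) with 3 in Hr.
    set (t := 2 * d * y * Z0).
    set (Zc := Z0 + l * l * t).
    set (A := l * r + 2 * y * Z0 * t + y * l * l * t * t).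
    exists 0%nat, 1%nat, Zc, (d * (1 + x' * l * Zc * Zc) * A). rewrite pw0, pw1. split.
    + assert (E1 : 1 + y * Zc * Zc = l * l * A).
      { unfold Zc, A. replace (l ^ 3) with (l * l * l) in Hr by ring. nia. }
      rewrite E1. ring.
    + apply hensel_odd; auto.
      * apply (ndiv_cong l _ ((2 * d * y * Z0) * (2 * d * y * Z0))).
        -- unfold cong. exists (d * (x' * Zc * Zc) * A + d * (r + y * l * t * t)).
           unfold A, t. ring.
        -- units; apply odd_prime_not2; auto.
      * exists (2 * d * y * Z0). apply cong_sym.
        unfold cong. exists (d * (x' * Zc * Zc) * A + d * (r + y * l * t * t)).
        unfold A, t. ring.
  - destruct (L3 l Hl H2 y d Hy Hd Hs) as [z0 [Hz1 Hz2]].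
    exists 0%nat, 0%nat, z0, (d * (1 + x' * l * z0 * z0) * (1 + y * z0 * z0)). rewrite !pw0. split.
    + ring.
    + apply hensel_odd; auto.
      * apply (ndiv_cong l _ (d * (1 + y * (z0 * z0)))); auto.
        unfold cong. exists (d * (x' * z0 * z0) * (1 + y * z0 * z0)). ring.
      * eapply sq_cong. exact Hz1. unfold cong.
        exists (- (d * (x' * z0 * z0) * (1 + y * z0 * z0))). ring.
Qed.

Lemma G_inf l d x' y' : prime l -> l <> 2 -> sq l (d * x' * y') -> ~ (l | d * x' * y') ->
  Good l d (l * x') (l * y').
Proof.
  intros Hl H2 Hs Hu.
  exists 1%nat, 1%nat, 1, (d * (l + x') * (l + y')). rewrite pw1. split.
  - ring.
  - apply hensel_odd; auto.
    + apply (ndiv_cong l _ (d * x' * y')); auto.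
      unfold cong. exists (d * (l + x' + y')). ring.
    + eapply sq_cong. exact Hs. unfold cong. exists (- (d * (l + x' + y'))). ring.
Qed.

Lemma G2b d x y : (8 | d * (4 + x) * (4 + y) - 1) -> Good 2 d x y.
Proof.
  intros H. exists 1%nat, 0%nat, 1, (d * (4 + x) * (4 + y)). rewrite pw1, pw0. split.
  ring. apply hensel_2; auto.
Qed.
Lemma G2c d x y : (8 | d * (16 + x) * (16 + y) - 1) -> Good 2 d x y.
Proof.
  intros H. exists 2%nat, 0%nat, 1, (d * (16 + x) * (16 + y)). rewrite pw2, pw0. split.
  ring. apply hensel_2; auto.
Qed.

Lemma G2d d x c : (8 | x + 1) -> Z.odd c = true -> Z.odd d = true -> Good 2 d x (x + 2 * c).
Proof.
  intros Hx Hc Hd.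
  assert (Hxo : Z.odd x = true).
  { destruct Hx as [k Hk]. apply Z.odd_spec. exists (4 * k - 1). lia. }
  destruct (root_from 2 x 9) as [Z0 HZ0].
  - apply hensel_2. destruct Hx as [k Hk]. exists (- k). lia.
  - apply inv_exists. apply prime_2. intros H2. apply Z.odd_spec in Hxo.
    destruct H2 as [k Hk]. destruct Hxo as [m Hm]. lia.
  - destruct HZ0 as [r Hr]. change (2 ^ Z.of_nat 9) with 512 in Hr.
    assert (HZ0o : Z.odd Z0 = true).
    { destruct (Z.Even_or_Odd Z0) as [[u Hu]|[u Hu]].
      - exfalso. subst Z0. nia.
      - apply Z.odd_spec. exists u. auto. }
    set (u := d * x * Z0 * c).
    set (Zc := Z0 + 16 * u).
    set (A := 16 * r + x * Z0 * u + 8 * x * u * u).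
    set (B := 16 * A + c * Zc * Zc).
    exists 0%nat, 3%nat, Zc, (d * A * B). rewrite pw0, pw3. split.
    + assert (E1 : 1 + x * Zc * Zc = 32 * A) by (unfold Zc, A; nia).
      assert (E2 : 1 + (x + 2 * c) * Zc * Zc = 2 * B) by (unfold B; replace (2 * (16 * A + c * Zc * Zc)) with (32 * A + 2 * c * Zc * Zc) by ring; rewrite <- E1; ring).
      rewrite E1, E2. ring.
    + apply hensel_2.
      assert (Hw : Z.odd (d * x * Z0 * c * Zc) = true).
      { unfold Zc. rewrite !Z.odd_mul, Hd, Hxo, HZ0o, Hc, Z.odd_add, Z.odd_mul, HZ0o. reflexivity. }
      apply odd_sq8 in Hw. destruct Hw as [k Hk].
      exists (k + d * (2 * r + x * u * u) * B + 2 * d * x * Z0 * u * A).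
      replace (d * A * B - 1) with ((d * x * Z0 * c * Zc) * (d * x * Z0 * c * Zc) - 1 + 8 * (d * (2 * r + x * u * u) * B + 2 * d * x * Z0 * u * A)) by (unfold B, A, u; ring).
      rewrite Hk. ring.
Qed.

Definition Wb (d p e : Z) : bool :=
  (d mod 8 =? 1) || ((d * (4 + p * e) * (4 + (p + 2) * e)) mod 8 =? 1)
  || ((d * p * (p + 2)) mod 8 =? 1) || ((p * e) mod 8 =? 7) || (((p + 2) * e) mod 8 =? 7).

Definition inIb (a p h : Z) : bool :=
  (a mod 8 =? 1) || (((1 + p * h) * (1 + (p + 2) * h)) mod 16 =? 0)
  || ((a mod 8 =? 3) && (p mod 4 =? 1)) || ((a mod 8 =? 7) && (p mod 4 =? 3)).

Lemma eqb_mod_div n a b : 0 < n -> (a mod n =? b) = true -> 0 <= b < n -> (n | a - b).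
Proof.
  intros Hn H Hb. apply Z.eqb_eq in H. apply cong_of_mod; [lia|]. rewrite H, Z.mod_small; auto.
Qed.

Lemma W_good d p e : Z.odd d = true -> Z.odd p = true -> Z.odd e = true ->
  Wb d p e = true -> Good 2 d (p * e) ((p + 2) * e).
Proof.
  intros Hd Hp He H. unfold Wb in H. rewrite !orb_true_iff in H.
  destruct H as [[[[H|H]|H]|H]|H]; apply eqb_mod_div in H; try lia.
  - apply Good_zero. apply hensel_2. auto.
  - apply G2b. auto.
  - apply G2c. apply odd_sq8 in He. destruct He as [k Hk]. destruct H as [j Hj].
    exists (j * e * e + k + 2 * d * (p * e + (p + 2) * e) + 32 * d). nia.
  - replace ((p + 2) * e) with (p * e + 2 * e) by ring. apply G2d; auto.
    destruct H as [k Hk]. exists (k + 1). lia.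
  - apply Good_sym. replace (p * e) with ((p + 2) * e + 2 * (- e)) by ring. apply G2d; auto.
    destruct H as [k Hk]. exists (k + 1). lia. rewrite Z.odd_opp. auto.
Qed.

Lemma cong_eqb n a b c : 0 < n -> cong n a b -> (a mod n =? c) = (b mod n =? c).
Proof. intros Hn H. rewrite (cong_mod n a b); auto. lia. Qed.

Ltac congr2 := repeat first
  [ apply cong_refl | assumption
  | apply cong_add | apply cong_sub | apply cong_mul | apply cong_opp ].

Lemma Wb_cong d p e d0 p0 e0 : cong 8 d d0 -> cong 8 p p0 -> cong 8 e e0 ->
  Wb d p e = Wb d0 p0 e0.
Proof.
  intros H1 H2 H3. unfold Wb.
  rewrite (cong_mod 8 d d0), (cong_mod 8 (d * (4 + p * e) * (4 + (p + 2) * e)) (d0 * (4 + p0 * e0) * (4 + (p0 + 2) * e0))),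
    (cong_mod 8 (d * p * (p + 2)) (d0 * p0 * (p0 + 2))), (cong_mod 8 (p * e) (p0 * e0)),
    (cong_mod 8 ((p + 2) * e) ((p0 + 2) * e0)); auto; try lia; congr2.
Qed.

Lemma inIb_cong a p h a0 p0 h0 : cong 16 a a0 -> cong 16 p p0 -> cong 16 h h0 ->
  inIb a p h = inIb a0 p0 h0.
Proof.
  intros H1 H2 H3.
  assert (d8 : (8 | 16)) by (exists 2; lia). assert (d4 : (4 | 16)) by (exists 4; lia).
  unfold inIb.
  rewrite (cong_mod 8 a a0), (cong_mod 16 ((1 + p * h) * (1 + (p + 2) * h)) ((1 + p0 * h0) * (1 + (p0 + 2) * h0))),
    (cong_mod 4 p p0); auto; try lia; try congr2; eapply cong_weak; eauto.
Qed.

Lemma odd_res8 x : Z.odd x = true -> In (x mod 8) [1; 3; 5; 7].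
Proof.
  intros H. apply Z.odd_spec in H. destruct H as [m Hm].
  simpl. pose proof (Z.mod_pos_bound x 8). pose proof (Z.div_mod x 8). lia.
Qed.
Lemma odd_res16 x : Z.odd x = true -> In (x mod 16) [1; 3; 5; 7; 9; 11; 13; 15].
Proof.
  intros H. apply Z.odd_spec in H. destruct H as [m Hm].
  simpl. pose proof (Z.mod_pos_bound x 16). pose proof (Z.div_mod x 16). lia.
Qed.

Definition L8 := [1; 3; 5; 7].
Definition L16 := [1; 3; 5; 7; 9; 11; 13; 15].

Lemma check_closure : forallb (fun p => forallb (fun D => forallb (fun a => forallb (fun b =>
   implb (Wb a p (D * a) && Wb b p (D * b)) (Wb (a * b) p (D * (a * b)))) L8) L8) L8) L8 = true.
Proof. vm_compute. reflexivity. Qed.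

Lemma check_inI : forallb (fun p => forallb (fun a => forallb (fun h =>
   implb (inIb a p h) (Wb a p h)) L16) L16) L16 = true.
Proof. vm_compute. reflexivity. Qed.

Lemma cong_mod8 x : cong 8 x (x mod 8).
Proof. apply cong_sym, cong_modr. lia. Qed.
Lemma cong_mod16 x : cong 16 x (x mod 16).
Proof. apply cong_sym, cong_modr. lia. Qed.

Lemma W_closure p D a b : Z.odd p = true -> Z.odd D = true -> Z.odd a = true -> Z.odd b = true ->
  Wb a p (D * a) = true -> Wb b p (D * b) = true -> Wb (a * b) p (D * (a * b)) = true.
Proof.
  intros Hp HD Ha Hb H1 H2.
  pose proof check_closure as C.
  rewrite forallb_forall in C. specialize (C (p mod 8) (odd_res8 p Hp)).
  rewrite forallb_forall in C. specialize (C (D mod 8) (odd_res8 D HD)).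
  rewrite forallb_forall in C. specialize (C (a mod 8) (odd_res8 a Ha)).
  rewrite forallb_forall in C. specialize (C (b mod 8) (odd_res8 b Hb)).
  rewrite (Wb_cong a p (D * a) (a mod 8) (p mod 8) (D mod 8 * (a mod 8))) in H1 by (try apply cong_mod8; congr2; apply cong_mod8).
  rewrite (Wb_cong b p (D * b) (b mod 8) (p mod 8) (D mod 8 * (b mod 8))) in H2 by (try apply cong_mod8; congr2; apply cong_mod8).
  rewrite (Wb_cong (a * b) p (D * (a * b)) (a mod 8 * (b mod 8)) (p mod 8) (D mod 8 * (a mod 8 * (b mod 8))))
    by (congr2; apply cong_mod8).
  rewrite H1, H2 in C. simpl in C. auto.
Qed.

Lemma W_inI a p h : Z.odd p = true -> Z.odd a = true -> Z.odd h = true ->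
  inIb a p h = true -> Wb a p h = true.
Proof.
  intros Hp Ha Hh H.
  pose proof check_inI as C.
  rewrite forallb_forall in C. specialize (C (p mod 16) (odd_res16 p Hp)).
  rewrite forallb_forall in C. specialize (C (a mod 16) (odd_res16 a Ha)).
  rewrite forallb_forall in C. specialize (C (h mod 16) (odd_res16 h Hh)).
  rewrite (inIb_cong a p h (a mod 16) (p mod 16) (h mod 16)) in H by apply cong_mod16.
  rewrite H in C. simpl in C.
  assert (d8 : (8 | 16)) by (exists 2; lia).
  rewrite (Wb_cong a p h (a mod 16) (p mod 16) (h mod 16)); auto; eapply cong_weak; eauto; apply cong_mod16.
Qed.

Lemma zprod_app l1 l2 : zprod (l1 ++ l2) = zprod l1 * zprod l2.
Proof. unfold zprod. induction l1 as [|a l1 IH]; cbn [app fold_right]; [ring | rewrite IH; ring]. Qed.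
Lemma zprod_perm l1 l2 : Permutation l1 l2 -> zprod l1 = zprod l2.
Proof. unfold zprod. induction 1; cbn [fold_right]; try ring; congruence. Qed.

Lemma map_nth_seq_gen {A} (l : list A) d k :
  map (fun i => nth i (repeat d k ++ l) d) (seq k (length l)) = l.
Proof.
  revert k. induction l as [|a l IH]; intros k; simpl. auto.
  f_equal.
  - rewrite app_nth2; rewrite repeat_length; auto. replace (k - k)%nat with 0%nat by lia. auto.
  - rewrite <- (IH (S k)) at 2. apply map_ext_in. intros i Hi.
    apply in_seq in Hi. rewrite !app_nth2; rewrite ?repeat_length; try lia. replace (i - k)%nat with (S (i - S k)) by lia. reflexivity.
Qed.

Lemma Dprod_seq Ds : Dprod Ds = prodD Ds (seq 0 (length Ds)).
Proof.
  unfold Dprod, prodD, Di. f_equal. symmetry. apply (map_nth_seq_gen Ds 1 0).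
Qed.

Definition rem (i : nat) (U : list nat) := filter (fun j => negb (Nat.eqb j i)) U.
Definition cmpl (n : nat) (U : list nat) := filter (fun j => negb (existsb (Nat.eqb j) U)) (seq 0 n).

Lemma in_rem i U x : In x (rem i U) <-> In x U /\ x <> i.
Proof.
  unfold rem. rewrite filter_In. rewrite negb_true_iff, Nat.eqb_neq. tauto.
Qed.
Lemma in_cmpl n U x : In x (cmpl n U) <-> (x < n)%nat /\ ~ In x U.
Proof.
  unfold cmpl. rewrite filter_In, in_seq, negb_true_iff.
  split.
  - intros [H1 H2]. split. lia. intros Hx.
    assert (existsb (Nat.eqb x) U = true) by (apply existsb_exists; exists x; split; auto; apply Nat.eqb_refl).
    congruence.
  - intros [H1 H2]. split. lia. destruct (existsb (Nat.eqb x) U) eqn:E; auto.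
    apply existsb_exists in E. destruct E as [y [Hy E]]. apply Nat.eqb_eq in E. subst. tauto.
Qed.

Lemma prod_split Ds U i : NoDup U -> In i U -> prodD Ds U = Di Ds i * prodD Ds (rem i U).
Proof.
  intros Hnd Hi. unfold prodD.
  assert (P : Permutation U (i :: rem i U)).
  { apply NoDup_Permutation; auto.
    - constructor. rewrite in_rem. tauto. apply NoDup_filter; auto.
    - intros x. simpl. rewrite in_rem. split.
      + intros Hx. destruct (Nat.eq_dec i x); auto.
      + intros [Hx|Hx]; subst; tauto. }
  apply (Permutation_map (Di Ds)) in P. rewrite (zprod_perm _ _ P). reflexivity.
Qed.

Lemma D_split Ds U : NoDup U -> (forall i, In i U -> (i < length Ds)%nat) ->
  Dprod Ds = prodD Ds U * prodD Ds (cmpl (length Ds) U).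
Proof.
  intros Hnd Hr. rewrite Dprod_seq. unfold prodD. rewrite <- zprod_app, <- map_app.
  apply zprod_perm, Permutation_map. apply NoDup_Permutation.
  - apply seq_NoDup.
  - apply NoDup_app; auto. unfold cmpl. apply NoDup_filter, seq_NoDup.
    intros x H1 H2. apply in_cmpl in H2. tauto.
  - intros x. rewrite in_app_iff, in_cmpl, in_seq. split.
    + intros H. destruct (classic (In x U)); [left|right]; auto. split; auto. lia.
    + intros [H|[H1 H2]]. apply Hr in H. lia. lia.
Qed.

Section DsFacts.
Variable Ds : list Z.
Hypothesis Hpr : Forall prime Ds.
Hypothesis Hnd : NoDup Ds.
Let n := length Ds.

Lemma Di_prime i : (i < n)%nat -> prime (Di Ds i).
Proof. intros H. unfold Di. rewrite Forall_nth in Hpr. apply Hpr. auto. Qed.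

Lemma Di_inj i j : (i < n)%nat -> (j < n)%nat -> Di Ds i = Di Ds j -> i = j.
Proof. intros Hi Hj E. rewrite NoDup_nth in Hnd. eapply Hnd; eauto. Qed.

Lemma prodD_pos U : (forall i, In i U -> (i < n)%nat) -> 0 < prodD Ds U.
Proof.
  induction U as [|a U IH]; intros Hr; unfold prodD in *; simpl. lia.
  assert (H := Di_prime a (Hr a (or_introl eq_refl))). apply prime_ge2 in H.
  assert (0 < zprod (map (Di Ds) U)) by (apply IH; intros; apply Hr; simpl; auto). nia.
Qed.

Lemma prime_div_prodD U l : (forall i, In i U -> (i < n)%nat) -> prime l -> (l | prodD Ds U) ->
  exists k, In k U /\ l = Di Ds k.
Proof.
  induction U as [|a U IH]; intros Hr Hl H; unfold prodD in *; simpl in *.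
  - apply Z.divide_pos_le in H; [|lia]. apply prime_ge2 in Hl. lia.
  - apply prime_mult in H; auto. destruct H as [H|H].
    + exists a. split; auto. apply prime_div_prime; auto. apply Di_prime. auto.
    + destruct IH as [k [Hk1 Hk2]]; auto. exists k. auto.
Qed.

Lemma not_div_prodD U k : (forall i, In i U -> (i < n)%nat) -> (k < n)%nat -> ~ In k U ->
  ~ (Di Ds k | prodD Ds U).
Proof.
  intros Hr Hk Hn H. apply prime_div_prodD in H; auto. destruct H as [j [Hj E]].
  apply Di_inj in E; auto. subst. tauto. apply Di_prime; auto.
Qed.

End DsFacts.

Lemma leg_range a l : -1 <= legendre a l <= 1.
Proof. unfold legendre. destruct (a mod l =? 0); [lia|]. destruct (is_sq_mod a l); lia. Qed.

Lemma term_nonneg a b l l' : 0 <= (1 - legendre a l) * (1 - legendre b l').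
Proof. pose proof (leg_range a l). pose proof (leg_range b l'). nia. Qed.

Lemma term_zero a b l l' : (1 - legendre a l) * (1 - legendre b l') = 0 ->
  legendre a l = 1 \/ legendre b l' = 1.
Proof. intros H. apply Z.mul_eq_0 in H. lia. Qed.

Lemma zsum_nonneg l : (forall x, In x l -> 0 <= x) -> 0 <= zsum l.
Proof.
  induction l as [|a l IH]; intros H; cbn [zsum fold_right] in *; unfold zsum in *; cbn [fold_right]. lia.
  assert (0 <= a) by (apply H; simpl; auto). assert (0 <= fold_right Z.add 0 l) by (apply IH; intros; apply H; simpl; auto). lia.
Qed.
Lemma zsum_zero l : (forall x, In x l -> 0 <= x) -> zsum l = 0 -> forall x, In x l -> x = 0.
Proof.
  induction l as [|a l IH]; intros H Hs x Hx; unfold zsum in *; cbn [fold_right] in *. contradiction.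
  assert (0 <= a) by (apply H; simpl; auto).
  assert (0 <= fold_right Z.add 0 l) by (apply (zsum_nonneg l); intros; apply H; simpl; auto).
  destruct Hx as [Hx|Hx]. lia. apply IH; auto. intros; apply H; simpl; auto. lia.
Qed.

Lemma Pi_nonneg p q Ds i : 0 <= Pi_plus p q Ds i.
Proof.
  unfold Pi_plus. pose proof (term_nonneg (- p * Dhat Ds i) (- q * Dhat Ds i) (Di Ds i) (Di Ds i)).
  assert (0 <= zsum (map (fun j => (1 - legendre (Di Ds i) (Di Ds j)) *
                      (1 - legendre (p * q * Di Ds i) (Di Ds j)))
            (filter (fun j => negb (Nat.eqb j i)) (seq 0 (length Ds))))).
  { apply zsum_nonneg. intros x Hx. apply in_map_iff in Hx. destruct Hx as [j [Hj _]]. subst. apply term_nonneg. }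
  lia.
Qed.

Lemma Pi_zero1 p q Ds i : Pi_plus p q Ds i = 0 ->
  legendre (- p * Dhat Ds i) (Di Ds i) = 1 \/ legendre (- q * Dhat Ds i) (Di Ds i) = 1.
Proof.
  intros H. unfold Pi_plus in H. apply term_zero.
  pose proof (term_nonneg (- p * Dhat Ds i) (- q * Dhat Ds i) (Di Ds i) (Di Ds i)).
  assert (0 <= zsum (map (fun j => (1 - legendre (Di Ds i) (Di Ds j)) *
                      (1 - legendre (p * q * Di Ds i) (Di Ds j)))
            (filter (fun j => negb (Nat.eqb j i)) (seq 0 (length Ds))))).
  { apply zsum_nonneg. intros x Hx. apply in_map_iff in Hx. destruct Hx as [j [Hj _]]. subst. apply term_nonneg. }
  lia.
Qed.

Lemma Pi_zero2 p q Ds i j : Pi_plus p q Ds i = 0 -> (j < length Ds)%nat -> j <> i ->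
  legendre (Di Ds i) (Di Ds j) = 1 \/ legendre (p * q * Di Ds i) (Di Ds j) = 1.
Proof.
  intros H Hj Hji. unfold Pi_plus in H. apply term_zero.
  pose proof (term_nonneg (- p * Dhat Ds i) (- q * Dhat Ds i) (Di Ds i) (Di Ds i)).
  set (L := map (fun j => (1 - legendre (Di Ds i) (Di Ds j)) *
                      (1 - legendre (p * q * Di Ds i) (Di Ds j)))
            (filter (fun j => negb (Nat.eqb j i)) (seq 0 (length Ds)))) in *.
  assert (HL : forall x, In x L -> 0 <= x).
  { intros x Hx. unfold L in Hx. apply in_map_iff in Hx. destruct Hx as [k [Hk _]]. subst. apply term_nonneg. }
  pose proof (zsum_nonneg L HL).
  apply (zsum_zero L HL). lia. unfold L. apply in_map_iff. exists j. split; auto.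
  apply filter_In. split. apply in_seq. lia. apply negb_true_iff, Nat.eqb_neq. auto.
Qed.

Lemma rho_count p q Ds L :
  zsum (map (fun i => 1 / (1 + Pi_plus p q Ds i)) L) =
  Z.of_nat (length (filter (fun i => Pi_plus p q Ds i =? 0) L)).
Proof.
  induction L as [|a L IH]. reflexivity.
  unfold zsum in *. cbn [map fold_right filter].
  pose proof (Pi_nonneg p q Ds a).
  destruct (Z.eqb_spec (Pi_plus p q Ds a) 0) as [E|E].
  - rewrite E, Z.add_0_r, Z.div_1_r. cbn [length]. rewrite IH. lia.
  - rewrite Z.div_small by lia. rewrite IH. lia.
Qed.

Lemma sign3 a b c : (a = 1 \/ a = -1) -> (b = 1 \/ b = -1) -> (c = 1 \/ c = -1) ->
  (b = 1 \/ a * b = 1) -> (c = 1 \/ a * c = 1) -> (b * c = 1 \/ a * (b * c) = 1).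
Proof. intros [|] [|] [|]; subst; lia. Qed.

Lemma signB al be s a : (al = 1 \/ al = -1) -> (be = 1 \/ be = -1) -> (s = 1 \/ s = -1) ->
  (al * s = 1 \/ be * s = 1) -> (s = 1 \/ a * s = 1) -> al * be = a -> al = 1 \/ be = 1.
Proof. intros [|] [|] [|]; subst; lia. Qed.

Lemma leg_prod_A l p q Ds Us : prime l -> l <> 2 -> ~ (l | p * q) ->
  (forall i, In i Us -> ~ (l | Di Ds i)) ->
  (forall i, In i Us -> legendre (Di Ds i) l = 1 \/ legendre (p * q * Di Ds i) l = 1) ->
  (legendre (prodD Ds Us) l = 1 \/ legendre (p * q * prodD Ds Us) l = 1) /\ ~ (l | prodD Ds Us).
Proof.
  intros Hl H2 Hpq. induction Us as [|a Us IH]; intros Hu Hc.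
  - assert (H1 : ~ (l | 1)).
    { intros H. apply Z.divide_pos_le in H; [|lia]. apply prime_ge2 in Hl. lia. }
    split; [left|]; unfold prodD; cbn.
    + apply leg_1; auto. exists 1. apply cong_refl.
    + auto.
  - destruct IH as [IH1 IH2].
    { intros i Hi. apply Hu. simpl; auto. }
    { intros i Hi. apply Hc. simpl; auto. }
    assert (E : prodD Ds (a :: Us) = Di Ds a * prodD Ds Us) by reflexivity.
    rewrite E. assert (Ha : ~ (l | Di Ds a)) by (apply Hu; simpl; auto).
    split.
    + rewrite (leg_mul l Hl H2 (p * q) (Di Ds a * prodD Ds Us)), (leg_mul l Hl H2 (Di Ds a) (prodD Ds Us)).
      rewrite (leg_mul l Hl H2 (p * q) (prodD Ds Us)) in IH1.
      specialize (Hc a (or_introl eq_refl)). rewrite (leg_mul l Hl H2 (p * q) (Di Ds a)) in Hc.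
      apply sign3; auto; apply leg_unit; auto.
    + apply unit_mul; auto.
Qed.

Lemma odd_of_ndiv2 x : ~ (2 | x) -> Z.odd x = true.
Proof.
  intros H. destruct (Z.Even_or_Odd x) as [[u Hu]|[u Hu]].
  - exfalso. apply H. exists u. lia.
  - apply Z.odd_spec. exists u. auto.
Qed.

Lemma exists_prime_div z : 1 < z -> exists r, prime r /\ (r | z).
Proof.
  assert (forall N w, (Z.to_nat w <= N)%nat -> 1 < w -> exists r, prime r /\ (r | w)).
  { induction N as [|N IH]; intros w Hz H1. lia.
    destruct (classic (prime w)) as [Hp|Hp].
    - exists w. split; auto. apply Z.divide_refl.
    - destruct (not_prime_divide w H1 Hp) as [m [Hm Hmz]].
      destruct (IH m) as [r [Hr1 Hr2]]; try lia.
      exists r. split; auto. eapply Z.divide_trans; eauto. }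
  intros H1. apply (H (Z.to_nat z)); auto.
Qed.

Lemma ndiv_of_mul l a b : ~ (l | a * b) -> ~ (l | a).
Proof. intros H Ha. apply H. apply Z.divide_mul_l. auto. Qed.
Lemma ndiv_of_mul_r l a b : ~ (l | a * b) -> ~ (l | b).
Proof. intros H Ha. apply H. apply Z.divide_mul_r. auto. Qed.

Lemma prodD_odd Ds V : (forall i, In i V -> Z.odd (Di Ds i) = true) -> Z.odd (prodD Ds V) = true.
Proof.
  induction V as [|a V IH]; intros H. reflexivity.
  change (prodD Ds (a :: V)) with (Di Ds a * prodD Ds V).
  rewrite Z.odd_mul, H, IH; auto. intros; apply H; simpl; auto. simpl; auto.
Qed.

Section Main.
Variables (p q : Z) (Ds : list Z).
Hypotheses (Hp : prime p) (Hq : prime q) (Hpo : Z.odd p = true) (Hqo : Z.odd q = true)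
  (Hqp : q - p = 2) (Hnd : NoDup Ds) (Hpr : Forall prime Ds)
  (H2D : ~ (2 | Dprod Ds)) (HpD : ~ (p | Dprod Ds)) (HqD : ~ (q | Dprod Ds)).

Definition Tset := filter (fun i => Pi_plus p q Ds i =? 0) (filter (in_I p q Ds) (seq 0 (length Ds))).

Lemma T_spec i : In i Tset <-> (i < length Ds)%nat /\ in_I p q Ds i = true /\ Pi_plus p q Ds i = 0.
Proof.
  unfold Tset. rewrite !filter_In, in_seq, Z.eqb_eq. split; intros; intuition lia.
Qed.

Lemma p_ne2 : p <> 2.
Proof. intros E. rewrite E in Hpo. discriminate. Qed.
Lemma q_ne2 : q <> 2.
Proof. intros E. rewrite E in Hqo. discriminate. Qed.
Lemma p_ndiv_q : ~ (p | q).
Proof. intros H. apply prime_div_prime in H; auto. lia. Qed.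
Lemma q_ndiv_p : ~ (q | p).
Proof. intros H. apply prime_div_prime in H; auto. lia. Qed.

Lemma Dhat_spec i : (i < length Ds)%nat -> Dprod Ds = Di Ds i * Dhat Ds i.
Proof.
  intros Hi. unfold Dhat.
  assert (E : Dprod Ds = Di Ds i * prodD Ds (rem i (seq 0 (length Ds)))).
  { rewrite Dprod_seq. apply prod_split. apply seq_NoDup. apply in_seq. lia. }
  pose proof (prime_ge2 _ (Di_prime Ds Hpr i Hi)).
  rewrite E. rewrite (Z.mul_comm (Di Ds i) (prodD Ds (rem i (seq 0 (length Ds))))) at 2.
  rewrite Z.div_mul by lia. ring.
Qed.

Lemma Di_div_D i : (i < length Ds)%nat -> (Di Ds i | Dprod Ds).
Proof. intros Hi. rewrite (Dhat_spec i Hi). apply Z.divide_mul_l, Z.divide_refl. Qed.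

Lemma div_D_of l a b : Dprod Ds = a * b -> (l | a) -> (l | Dprod Ds).
Proof. intros E H. rewrite E. apply Z.divide_mul_l. auto. Qed.
Lemma div_D_of_r l a b : Dprod Ds = a * b -> (l | b) -> (l | Dprod Ds).
Proof. intros E H. rewrite E. apply Z.divide_mul_r. auto. Qed.

Lemma Di_facts i : (i < length Ds)%nat ->
  prime (Di Ds i) /\ Di Ds i <> 2 /\ ~ (Di Ds i | p) /\ ~ (Di Ds i | q) /\ Z.odd (Di Ds i) = true.
Proof.
  intros Hi. pose proof (Di_prime Ds Hpr i Hi) as Hl. pose proof (Di_div_D i Hi) as Hd.
  split; [auto|]. split; [|split; [|split]].
  - intros E. apply H2D. rewrite <- E. auto.
  - intros H. apply prime_div_prime in H; auto. apply HpD. rewrite <- H. auto.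
  - intros H. apply prime_div_prime in H; auto. apply HqD. rewrite <- H. auto.
  - apply odd_of_ndiv2. intros H. apply H2D. eapply Z.divide_trans; eauto.
Qed.

Lemma Wb_T V : incl V Tset -> Wb (prodD Ds V) p (Dprod Ds * prodD Ds V) = true.
Proof.
  induction V as [|a V IH]; intros Hinc.
  - unfold Wb. reflexivity.
  - assert (Ha : In a Tset) by (apply Hinc; simpl; auto).
    apply T_spec in Ha. destruct Ha as [Han [HaI HaP]].
    assert (IH' := IH (fun x Hx => Hinc x (or_intror Hx))).
    assert (E : prodD Ds (a :: V) = Di Ds a * prodD Ds V) by reflexivity.
    assert (HV : forall i, In i V -> (i < length Ds)%nat).
    { intros i Hi. apply (proj1 (T_spec i)). apply Hinc. simpl; auto. }
    destruct (Di_facts a Han) as [_ [_ [_ [_ Hao]]]].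
    assert (HDo : Z.odd (Dprod Ds) = true) by (apply odd_of_ndiv2; auto).
    assert (HDE := Dhat_spec a Han).
    assert (Hho : Z.odd (Dhat Ds a) = true).
    { apply odd_of_ndiv2. intros H. apply H2D. rewrite HDE. apply Z.divide_mul_r. auto. }
    assert (HVo : Z.odd (prodD Ds V) = true).
    { apply prodD_odd. intros i Hi. apply Di_facts. auto. }
    rewrite E. apply W_closure; auto.
    assert (HI : inIb (Di Ds a) p (Dhat Ds a) = in_I p q Ds a).
    { unfold inIb, in_I. replace q with (p + 2) by lia. reflexivity. }
    rewrite <- HI in HaI. apply W_inI in HaI; auto.
    rewrite <- HaI. apply Wb_cong; try apply cong_refl.
    apply odd_sq8 in Hao. destruct Hao as [k Hk].
    unfold cong. exists (k * Dhat Ds a). rewrite HDE.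
    replace (Di Ds a * Dhat Ds a * Di Ds a - Dhat Ds a) with (Dhat Ds a * (Di Ds a * Di Ds a - 1)) by ring.
    rewrite Hk. ring.
Qed.


Lemma U_range U : incl U Tset -> forall i, In i U -> (i < length Ds)%nat.
Proof. intros H i Hi. apply (proj1 (T_spec i)). auto. Qed.
Lemma comp_range U : forall i, In i (cmpl (length Ds) U) -> (i < length Ds)%nat.
Proof. intros i Hi. apply in_cmpl in Hi. tauto. Qed.

Lemma D_odd : Z.odd (Dprod Ds) = true.
Proof. apply odd_of_ndiv2; auto. Qed.

Lemma local_2 U : incl U Tset -> NoDup U -> Cd_Ql_point p q (Dprod Ds) (prodD Ds U) 2.
Proof.
  intros HU HnU. pose proof (D_split Ds U HnU (U_range U HU)) as HDe.
  set (d := prodD Ds U) in *. set (e := prodD Ds (cmpl (length Ds) U)) in *.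
  apply (point_of p q (Dprod Ds) d e 2); [lia|auto|].
  assert (Hdo : Z.odd d = true).
  { apply prodD_odd. intros i Hi. apply Di_facts. apply (U_range U HU); auto. }
  assert (Heo : Z.odd e = true).
  { apply prodD_odd. intros i Hi. apply Di_facts. apply (comp_range U); auto. }
  replace q with (p + 2) by lia. apply W_good; auto.
  rewrite (Wb_cong d p e d p (Dprod Ds * d)); try apply cong_refl.
  - apply Wb_T; auto.
  - apply odd_sq8 in Hdo. destruct Hdo as [k Hk]. unfold cong. exists (- (e * k)).
    rewrite HDe. replace (e - d * e * d) with (- e * (d * d - 1)) by ring. rewrite Hk. ring.
Qed.

Lemma local_p U : incl U Tset -> NoDup U -> Cd_Ql_point p q (Dprod Ds) (prodD Ds U) p.
Proof.
  intros HU HnU. pose proof (D_split Ds U HnU (U_range U HU)) as HDe.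
  set (d := prodD Ds U) in *. set (e := prodD Ds (cmpl (length Ds) U)) in *.
  pose proof (prime_ge2 p Hp).
  apply (point_of p q (Dprod Ds) d e p); [lia|auto|].
  apply G_padic; auto. apply p_ne2. apply Z.divide_mul_l, Z.divide_refl.
  - apply unit_mul; auto. apply p_ndiv_q. intros H0. apply HpD. eapply div_D_of_r; eauto.
  - intros H0. apply HpD. eapply div_D_of; eauto.
Qed.

Lemma local_q U : incl U Tset -> NoDup U -> Cd_Ql_point p q (Dprod Ds) (prodD Ds U) q.
Proof.
  intros HU HnU. pose proof (D_split Ds U HnU (U_range U HU)) as HDe.
  set (d := prodD Ds U) in *. set (e := prodD Ds (cmpl (length Ds) U)) in *.
  pose proof (prime_ge2 q Hq).
  apply (point_of p q (Dprod Ds) d e q); [lia|auto|].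
  apply Good_sym. apply G_padic; auto. apply q_ne2. apply Z.divide_mul_l, Z.divide_refl.
  - apply unit_mul; auto. apply q_ndiv_p. intros H0. apply HqD. eapply div_D_of_r; eauto.
  - intros H0. apply HqD. eapply div_D_of; eauto.
Qed.


Lemma ndiv_opp l a : ~ (l | a) -> ~ (l | - a).
Proof. intros H H1. apply H. apply Z.divide_opp_r in H1. rewrite Z.opp_involutive in H1. auto. Qed.

Lemma local_Ds U l : incl U Tset -> NoDup U -> In l Ds -> Cd_Ql_point p q (Dprod Ds) (prodD Ds U) l.
Proof.
  intros HU HnU Hl.
  apply In_nth with (d := 1) in Hl. destruct Hl as [j [Hj Ejl]]. subst l.
  change (nth j Ds 1) with (Di Ds j).
  destruct (Di_facts j Hj) as [Hlp [Hl2 [Hlp' [Hlq Hlo]]]].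
  pose proof (D_split Ds U HnU (U_range U HU)) as HDe.
  set (d := prodD Ds U) in *. set (e := prodD Ds (cmpl (length Ds) U)) in *.
  pose proof (prime_ge2 _ Hlp) as Hl0.
  apply (point_of p q (Dprod Ds) d e (Di Ds j)); [lia|auto|].
  set (l := Di Ds j) in *.
  assert (Hpq : ~ (l | p * q)) by (apply unit_mul; auto).
  assert (HUr := U_range U HU).
  destruct (classic (In j U)) as [Hju|Hju].
  - set (d' := prodD Ds (rem j U)).
    assert (Hd : d = l * d') by (apply prod_split; auto).
    assert (Hrr : forall i, In i (rem j U) -> (i < length Ds)%nat).
    { intros i Hi. apply in_rem in Hi. apply HUr. tauto. }
    assert (Hd' : ~ (l | d')).
    { apply not_div_prodD; auto. rewrite in_rem. tauto. }
    assert (He : ~ (l | e)).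
    { apply not_div_prodD; auto. apply comp_range. rewrite in_cmpl. tauto. }
    assert (Hhat : Dhat Ds j = d' * e).
    { pose proof (Dhat_spec j Hj) as E. fold l in E. rewrite HDe, Hd in E.
      apply (Z.mul_reg_l _ _ l); [lia|]. rewrite <- E. ring. }
    assert (HPj : Pi_plus p q Ds j = 0) by (apply T_spec; auto).
    assert (H1 := Pi_zero1 p q Ds j HPj). fold l in H1. rewrite Hhat in H1.
    assert (Hku : forall k, In k (rem j U) -> ~ (l | Di Ds k)).
    { intros k Hk Hdk. apply in_rem in Hk. destruct Hk as [Hk1 Hk2].
      apply prime_div_prime in Hdk; auto. apply Di_inj in Hdk; auto. apply Di_prime; auto. }
    destruct (leg_prod_A l p q Ds (rem j U) Hlp Hl2 Hpq Hku) as [HA HAu].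
    { intros k Hk. apply in_rem in Hk. destruct Hk as [Hk1 Hk2].
      apply (Pi_zero2 p q Ds k j); auto. apply T_spec. auto. }
    fold d' in HA.
    assert (Hpe : ~ (l | p * e)) by (apply unit_mul; auto).
    assert (Hqe : ~ (l | q * e)) by (apply unit_mul; auto).
    assert (Hmpe : ~ (l | - p * e)) by (apply unit_mul; auto; apply ndiv_opp; auto).
    assert (Hmqe : ~ (l | - q * e)) by (apply unit_mul; auto; apply ndiv_opp; auto).
    assert (E1 : legendre (- p * (d' * e)) l = legendre (- p * e) l * legendre d' l).
    { rewrite <- leg_mul; auto. f_equal. ring. }
    assert (E2 : legendre (- q * (d' * e)) l = legendre (- q * e) l * legendre d' l).
    { rewrite <- leg_mul; auto. f_equal. ring. }
    assert (E3 : legendre (p * q * d') l = legendre (p * q) l * legendre d' l) by (apply leg_mul; auto).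
    assert (E4 : legendre (- p * e) l * legendre (- q * e) l = legendre (p * q) l).
    { rewrite <- leg_mul; auto. replace (- p * e * (- q * e)) with (p * q * (e * e)) by ring.
      rewrite !leg_mul; auto. destruct (leg_unit l Hlp Hl2 e He) as [X|X]; rewrite X; ring. }
    rewrite E1, E2 in H1. rewrite E3 in HA.
    destruct (signB _ _ _ _ (leg_unit l Hlp Hl2 _ Hmpe) (leg_unit l Hlp Hl2 _ Hmqe)
               (leg_unit l Hlp Hl2 _ Hd') H1 HA E4) as [Ha|Ha].
    + apply leg_1_sq in Ha; auto. destruct Ha as [Ha _].
      replace (q * e) with (p * e + 2 * e) by lia.
      apply (G_root l d d'); auto. replace (- (p * e)) with (- p * e) by ring. auto.
    + apply leg_1_sq in Ha; auto. destruct Ha as [Ha _].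
      apply Good_sym. replace (p * e) with (q * e + 2 * (- e)) by lia.
      apply (G_root l d d'); auto. apply ndiv_opp; auto.
      replace (- (q * e)) with (- q * e) by ring. auto.
  - assert (Hjc : In j (cmpl (length Ds) U)) by (apply in_cmpl; auto).
    set (e' := prodD Ds (rem j (cmpl (length Ds) U))).
    assert (HndC : NoDup (cmpl (length Ds) U)) by (apply NoDup_filter, seq_NoDup).
    assert (He : e = l * e') by (apply prod_split; auto).
    assert (He' : ~ (l | e')).
    { apply not_div_prodD; auto. intros i Hi. apply in_rem in Hi. apply (comp_range U). tauto.
      rewrite in_rem. tauto. }
    assert (Hdl : ~ (l | d)) by (apply not_div_prodD; auto).
    assert (Hku : forall k, In k U -> ~ (l | Di Ds k)).
    { intros k Hk Hdk. apply prime_div_prime in Hdk; auto. apply Di_inj in Hdk; auto.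
      subst. tauto. apply Di_prime; auto. }
    destruct (leg_prod_A l p q Ds U Hlp Hl2 Hpq Hku) as [HA HAu].
    { intros k Hk. apply (Pi_zero2 p q Ds k j); auto. apply T_spec. auto.
      intros E. subst. tauto. }
    fold d in HA, HAu. destruct HA as [HA|HA].
    + apply Good_zero. apply leg_1_sq in HA; auto. apply hensel_odd; tauto.
    + apply leg_1_sq in HA; auto. destruct HA as [HA HA'].
      rewrite He. replace (p * (l * e')) with (l * (p * e')) by ring.
      replace (q * (l * e')) with (l * (q * e')) by ring.
      apply G_inf; auto.
      * apply (sq_cong l (p * q * d * (e' * e'))). apply sq_mul; auto. apply sq_sq.
        replace (d * (p * e') * (q * e')) with (p * q * d * (e' * e')) by ring. apply cong_refl.
      * apply unit_mul; auto. apply unit_mul; auto. apply unit_mul; auto. apply unit_mul; auto.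
Qed.

End Main.

Section Fin.
Variables (p q : Z) (Ds : list Z).
Hypotheses (Hp : prime p) (Hq : prime q) (Hpo : Z.odd p = true) (Hqo : Z.odd q = true)
  (Hqp : q - p = 2) (Hnd : NoDup Ds) (Hpr : Forall prime Ds)
  (H2D : ~ (2 | Dprod Ds)) (HpD : ~ (p | Dprod Ds)) (HqD : ~ (q | Dprod Ds)).

Lemma squarefree_U U : (forall i, In i U -> (i < length Ds)%nat) -> NoDup U ->
  squarefree (prodD Ds U).
Proof.
  intros Hr HnU. pose proof (prodD_pos Ds Hpr U Hr) as Hpos. split. lia.
  intros k Hk. apply NNPP. intros Hk1.
  destruct (Z.eq_dec k 0) as [E|E].
  { subst k. destruct Hk as [z Hz]. lia. }
  destruct (exists_prime_div (Z.abs k)) as [r [Hr1 Hr2]]. lia.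
  assert (Hrk : (r | k)) by (apply Z.divide_abs_r; auto).
  assert (Hrr : (r * r | prodD Ds U)) by (eapply Z.divide_trans; [|exact Hk]; apply (Z.divide_trans _ (r * k)); [apply Z.mul_divide_mono_l | apply Z.mul_divide_mono_r]; auto).
  assert (Hrd : (r | prodD Ds U)) by (eapply Z.divide_trans; [|exact Hrr]; apply Z.divide_mul_l, Z.divide_refl).
  destruct (prime_div_prodD Ds Hpr U r Hr Hr1 Hrd) as [i [Hi Ei]].
  rewrite (prod_split Ds U i HnU Hi) in Hrr. rewrite <- Ei in Hrr.
  apply Z.mul_divide_cancel_l in Hrr; [|pose proof (prime_ge2 r Hr1); lia].
  destruct (prime_div_prodD Ds Hpr (rem i U) r) as [j [Hj Ej]]; auto.
  { intros x Hx. apply in_rem in Hx. apply Hr. tauto. }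
  apply in_rem in Hj. destruct Hj as [Hj1 Hj2].
  apply Hj2. apply (Di_inj Ds Hnd); auto. congruence.
Qed.

Lemma selmer_U U : incl U (Tset p q Ds) -> NoDup U -> selmer_hatphi p q Ds (prodD Ds U).
Proof.
  intros HU HnU.
  assert (Hr := U_range p q Ds U HU).
  pose proof (prodD_pos Ds Hpr U Hr) as Hpos.
  split; [|split].
  - split. apply squarefree_U; auto.
    intros l Hl Hld. destruct (prime_div_prodD Ds Hpr U l Hr Hl Hld) as [i [Hi Ei]].
    right. right. right. subst l. unfold Di. apply nth_In. auto.
  - exists 0%R, (sqrt (IZR (prodD Ds U))).
    rewrite mult_IZR. rewrite <- Rsqr_pow2, Rsqr_sqrt by (apply IZR_le; lia). ring.
  - intros l Hl. destruct Hl as [E|[E|[E|E]]].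
    + subst l. apply local_2; auto.
    + subst l. apply local_p; auto.
    + subst l. apply local_q; auto.
    + apply local_Ds; auto.
Qed.

Lemma indep_one U1 U2 x : incl U1 (Tset p q Ds) -> NoDup U1 -> incl U2 (Tset p q Ds) ->
  prodD Ds U1 * prodD Ds U2 = x * x -> incl U1 U2.
Proof.
  intros H1 Hn1 H2 E i Hi. apply NNPP. intros Hni.
  assert (Hr1 := U_range p q Ds U1 H1). assert (Hr2 := U_range p q Ds U2 H2).
  assert (Hin : (i < length Ds)%nat) by auto.
  set (l := Di Ds i).
  assert (Hl : prime l) by (apply Di_prime; auto).
  assert (Hl0 := prime_ge2 l Hl).
  rewrite (prod_split Ds U1 i Hn1 Hi) in E. fold l in E.
  set (P1 := prodD Ds (rem i U1)) in *. set (P2 := prodD Ds U2) in *.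
  assert (HP1 : ~ (l | P1)).
  { apply not_div_prodD; auto. intros k Hk. apply in_rem in Hk. apply Hr1. tauto. rewrite in_rem. tauto. }
  assert (HP2 : ~ (l | P2)) by (apply not_div_prodD; auto).
  assert (Hx : (l | x * x)) by (rewrite <- E; apply Z.divide_mul_l; apply Z.divide_mul_l, Z.divide_refl).
  apply prime_mult in Hx; auto. assert (Hx' : (l | x)) by tauto. destruct Hx' as [y Hy].
  subst x. assert (E' : P1 * P2 = l * (y * y)).
  { apply (Z.mul_reg_l _ _ l); [lia|]. rewrite <- Z.mul_assoc in E. rewrite E. ring. }
  assert (Hd : (l | P1 * P2)) by (rewrite E'; apply Z.divide_mul_l, Z.divide_refl).
  apply prime_mult in Hd; auto. tauto.
Qed.

End Fin.

Theorem theorem1p3 (p q : Z) (Ds : list Z) :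
  prime p -> prime q -> Z.odd p = true -> Z.odd q = true -> q - p = 2 ->
  NoDup Ds -> Forall prime Ds ->
  ~ (2 | Dprod Ds) -> ~ (p | Dprod Ds) -> ~ (q | Dprod Ds) ->
  exists T : list nat,
    NoDup T /\ (forall i, In i T -> (i < length Ds)%nat) /\
    Z.of_nat (length T) = rho_plus p q Ds /\
    (forall U : list nat, incl U T -> NoDup U ->
       selmer_hatphi p q Ds (prodD Ds U)) /\
    (forall U1 U2 : list nat, incl U1 T -> NoDup U1 -> incl U2 T -> NoDup U2 ->
       (exists x : Z, prodD Ds U1 * prodD Ds U2 = x * x) ->
       incl U1 U2 /\ incl U2 U1).
Proof.
  intros Hp Hq Hpo Hqo Hqp Hnd Hpr H2D HpD HqD.
  exists (Tset p q Ds). split; [|split; [|split; [|split]]].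
  - unfold Tset. apply NoDup_filter, NoDup_filter, seq_NoDup.
  - intros i Hi. apply (T_spec p q Ds i) in Hi. tauto.
  - unfold rho_plus. rewrite rho_count. reflexivity.
  - intros U HU HnU. apply selmer_U; auto.
  - intros U1 U2 H1 Hn1 H2 Hn2 [x Hx]. split.
    + eapply indep_one; eauto.
    + eapply indep_one; eauto. rewrite Z.mul_comm. eauto.
Qed.
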